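(* Assume $k=2$, and write $y=y_1$. (1) $r=e-1$ if and only if one of the following holds: (a) $2y\ge c+e$; (b) $2y=(2q+1)e<c+e$ for some integer $q\ge1$, $p\ge2$, and $y\in v(xR:\mathfrak m)$. (2) $r=e-2$ if and only if $2y<c+e$ and, if $2y=(2q+1)e$ for some integer $q$, then $y\notin v(xR:\mathfrak m)$.
   Context: Let $(R,\mathfrak m)$ be a one-dimensional local Noetherian domain with quotient field $K$, not regular, analytically irreducible (the integral closure $\overline R$ of $R$ in $K$ is a DVR and a finite $R$-module) and residually rational. Let $v$ be the valuation of $\overline R$ normalized so a uniformizer $t$ has value 1, $v(R)=\{v(a):a\in R\setminus\{0\}\}$, $\mathfrak C=(R:_K\overline R)=t^c\overline R$ with $c$ the least element of $v(R)$ with $c+\mathbb N\subseteq v(R)$, $r=\ell_R((R:_K\mathfrak m)/R)$, $e$ the least positive element of $v(R)$. Let $x\in\mathfrak m$ with $v(x)=e$, $k=\ell_R(R/(\mathfrak C+xR))$, $(xR:\mathfrak m)=\{a\in K:a\mathfrak m\subseteq xR\}$ (an ideal of $R$) with value set $v(xR:\mathfrak m)$. Let $p$ be the integer with $c-e\le pe<c$. When $k=2$, $y_1$ is the unique $y\in v(R)$ with $0<y<c$ and $y-e\notin v(R)$ (the unique nonzero element of $v(R)\setminus v(\mathfrak C+xR)$). *)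

(* Defs.v *)
From mathcomp Require Import all_boot all_order all_algebra.
Set Implicit Arguments. Unset Strict Implicit. Unset Printing Implicit Defensive.
Import Order.TTheory GRing.Theory Num.Theory.
Local Open Scope ring_scope.

Section Defs.
Variable K : fieldType.
Implicit Types (A B N M I P R m : K -> Prop) (v : K -> int).

Definition ksubset A B := forall a, A a -> B a.
Definition kseteq A B := forall a, A a <-> B a.

(* v is a discrete valuation of K, normalized so that a uniformizer has
   value 1 (the value v 0 is irrelevant and never used). *)
Definition is_valuation v :=
  [/\ (forall a b, a != 0 -> b != 0 -> v (a * b) = v a + v b),
      (forall a b, a != 0 -> b != 0 -> a + b != 0 ->
         Num.min (v a) (v b) <= v (a + b))
    & exists t, t != 0 /\ v t = 1].

Definition valring v a := a = 0 \/ 0 <= v a.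
Definition valmax v a := a = 0 \/ 0 < v a.

Definition subring R :=
  [/\ R 0, R 1, (forall a b, R a -> R b -> R (a + b)),
      (forall a, R a -> R (- a)) & (forall a b, R a -> R b -> R (a * b))].

Definition Rmodule R M :=
  [/\ M 0, (forall a b, M a -> M b -> M (a + b))
    & (forall r a, R r -> M a -> M (r * a))].

Definition ideal R I := ksubset I R /\ Rmodule R I.

Definition Rspan R (s : seq K) a :=
  exists rs : seq K, [/\ size rs = size s, (forall i, (i < size s)%N -> R rs`_i)
                       & a = \sum_(i < size s) rs`_i * s`_i].

Definition local_with R m :=
  [/\ ideal R m, ~ m 1 & forall a, R a -> ~ m a -> exists b, R b /\ a * b = 1].

Definition noetherian R :=
  forall I, ideal R I -> exists s : seq K,
    (forall i, (i < size s)%N -> I s`_i) /\ kseteq I (Rspan R s).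

Definition prime_ideal R P :=
  [/\ ideal R P, ~ P 1 & forall a b, R a -> R b -> P (a * b) -> P a \/ P b].

Definition dim_one R m :=
  (exists a, m a /\ a != 0) /\
  forall P, prime_ideal R P -> (exists a, P a /\ a != 0) -> kseteq P m.

Definition is_frac_field R := forall a, exists b d, [/\ R b, R d, d != 0 & a = b / d].

Definition integral_over R a :=
  exists (n : nat) (cs : seq K), [/\ size cs = n, (forall i, (i < n)%N -> R cs`_i)
    & a ^+ n + \sum_(i < n) cs`_i * a ^+ i = 0].

(* regular local ring of dimension one = maximal ideal principal *)
Definition principal_max R m := exists g, R g /\ kseteq m (fun a => exists r, R r /\ a = r * g).

Definition setting v R m :=
  [/\ is_valuation v, subring R, is_frac_field R, local_with R m & noetherian R] /\
  [/\ dim_one R m,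
      (* analytically irreducible: integral closure of R in K is the DVR V of v *)
      (forall a, integral_over R a <-> valring v a),
      (exists s : seq K, kseteq (valring v) (Rspan R s)),
      ~ principal_max R m
    & (* residually rational: R/m -> V/tV is onto *)
      (forall a, valring v a -> exists b, R b /\ valmax v (a - b))].

Definition vset v (S : K -> Prop) (n : int) := exists a, [/\ S a, a != 0 & v a = n].

Definition Rchain R N M (n : nat) :=
  exists f : nat -> K -> Prop,
    [/\ kseteq (f 0%N) N, kseteq (f n) M, (forall i, (i <= n)%N -> Rmodule R (f i))
      & forall i, (i < n)%N -> ksubset (f i) (f i.+1) /\ ~ ksubset (f i.+1) (f i)].

Definition Rlength R N M (n : nat) :=
  Rchain R N M n /\ forall n', Rchain R N M n' -> (n' <= n)%N.

Definition colon A B a := forall b, B b -> A (a * b).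

Definition conductor v R := colon R (valring v).

Definition cond_plus_x v R x a := exists c0 r, [/\ conductor v R c0, R r & a = c0 + x * r].

Definition principal R x a := exists r, R r /\ a = x * r.

End Defs.

(* Main.v *)
Require Import Defs.
From mathcomp Require Import all_boot all_order all_algebra.
Import Order.TTheory GRing.Theory Num.Theory.
From mathcomp Require Import zify.
From Stdlib Require Import Classical.
From mathcomp Require Import ring.
Set Implicit Arguments. Unset Strict Implicit. Unset Printing Implicit Defensive.
Local Open Scope ring_scope.

Section Val.
Variable K : fieldType.
Variable v : K -> int.
Hypothesis hv : is_valuation v.
Implicit Types a b : K.

Lemma vM a b : a != 0 -> b != 0 -> v (a * b) = v a + v b.
Proof. by case: hv => h _ _; apply: h. Qed.

Lemma vDmin a b : a != 0 -> b != 0 -> a + b != 0 -> v a <= v (a + b) \/ v b <= v (a + b).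
Proof. case: hv => _ h _ ha hb hab. have := h _ _ ha hb hab. rewrite ge_min.
by case/orP; [left|right]. Qed.

Lemma v1 : v 1 = 0.
Proof. have h : v (1 * 1) = v 1 + v 1 := vM (oner_neq0 K) (oner_neq0 K).
rewrite mulr1 in h. lia. Qed.

Lemma vV a : a != 0 -> v a^-1 = - v a.
Proof. move=> ha. have hi : a^-1 != 0 by rewrite invr_eq0.
have := vM ha hi. rewrite mulfV // v1. lia. Qed.

Lemma vN1 : v (-1) = 0.
Proof. have h : (-1 : K) != 0 by rewrite oppr_eq0 oner_neq0.
have := vM h h. rewrite mulrNN mulr1 v1. lia. Qed.

Lemma vN a : a != 0 -> v (- a) = v a.
Proof. move=> ha. have h : (-1 : K) != 0 by rewrite oppr_eq0 oner_neq0.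
rewrite -mulN1r vM // vN1 add0r //. Qed.

Lemma vDlt a b : a != 0 -> b != 0 -> v a < v b -> a + b != 0 /\ v (a + b) = v a.
Proof.
move=> ha hb hlt.
have hab : a + b != 0.
  apply/negP => /eqP h. have : b = - a by apply/eqP; rewrite -addr_eq0 addrC h.
  move=> hb'. move: hlt. rewrite hb' vN //. lia.
split => //.
have hnb : - b != 0 by rewrite oppr_eq0.
have e1 : a = (a + b) + - b by rewrite addrK.
have h1 : v ((a + b) + - b) >= v (a + b) \/ v ((a + b) + - b) >= v (- b).
  apply: vDmin => //. by rewrite -e1.
rewrite -e1 vN // in h1.
have h2 := vDmin ha hb hab.
lia.
Qed.

Lemma vDge a b (z : int) : a + b != 0 -> (a = 0 \/ z <= v a) -> (b = 0 \/ z <= v b) -> z <= v (a + b).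
Proof.
move=> hab ha hb.
have [a0|a0] := eqVneq a 0.
  subst a. rewrite add0r in hab *. case: hb => [hb|//]. by move: hab; rewrite hb eqxx.
have [b0|b0] := eqVneq b 0.
  subst b. rewrite addr0. case: ha => [ha|//]. by move: a0; rewrite ha eqxx.
case: ha => [ha|ha]; first by move: a0; rewrite ha eqxx.
case: hb => [hb|hb]; first by move: b0; rewrite hb eqxx.
have := vDmin a0 b0 hab. lia.
Qed.

Lemma vX a n : a != 0 -> v (a ^+ n) = n%:Z * v a.
Proof.
move=> ha; elim: n => [|n IH]; first by rewrite expr0 v1 mul0r.
by rewrite exprS vM ?expf_neq0 // IH intS mulrDl mul1r.
Qed.


Definition ge (z : int) a := a = 0 \/ z <= v a.

Lemma geD z a b : ge z a -> ge z b -> ge z (a + b).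
Proof.
move=> ha hb. have [h|h] := eqVneq (a + b) 0; first by left.
right; exact: vDge.
Qed.

Lemma geN z a : ge z a -> ge z (- a).
Proof. case=> [->|h]; first by left; rewrite oppr0.
have [a0|a0] := eqVneq a 0; first by left; rewrite a0 oppr0.
by right; rewrite vN. Qed.

Lemma geB z a b : ge z a -> ge z b -> ge z (a - b).
Proof. by move=> ha hb; apply: geD => //; apply: geN. Qed.

Lemma geM z1 z2 a b : ge z1 a -> ge z2 b -> ge (z1 + z2) (a * b).
Proof.
case=> [->|ha]; first by left; rewrite mul0r.
case=> [->|hb]; first by left; rewrite mulr0.
have [a0|a0] := eqVneq a 0; first by left; rewrite a0 mul0r.
have [b0|b0] := eqVneq b 0; first by left; rewrite b0 mulr0.
right; rewrite vM //. lia.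
Qed.

Lemma ge_le z1 z2 a : z1 <= z2 -> ge z2 a -> ge z1 a.
Proof. move=> h [->|h2]; [by left|right; lia]. Qed.

End Val.

Section Ring.
Variable K : fieldType.
Variable v : K -> int.
Variables R m : K -> Prop.
Implicit Types a b z s l : K.
Hypothesis hv : is_valuation v.
Hypothesis hR : subring R.
Hypothesis hRV : forall a, R a -> ge v 0 a.
Hypothesis hloc : local_with R m.
Hypothesis hres : forall a, valring v a -> exists b, R b /\ valmax v (a - b).

Lemma R0 : R 0. Proof. by case: hR. Qed.
Lemma R1 : R 1. Proof. by case: hR. Qed.
Lemma RD a b : R a -> R b -> R (a + b). Proof. case: hR => _ _ h _ _; exact: h. Qed.
Lemma RN a : R a -> R (- a). Proof. case: hR => _ _ _ h _; exact: h. Qed.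
Lemma RM a b : R a -> R b -> R (a * b). Proof. case: hR => _ _ _ _ h; exact: h. Qed.
Lemma RB a b : R a -> R b -> R (a - b). Proof. by move=> ha hb; apply: RD => //; apply: RN. Qed.
Lemma RX a n : R a -> R (a ^+ n).
Proof. move=> ha; elim: n => [|n IH]; [rewrite expr0; exact: R1|rewrite exprS; exact: RM]. Qed.

Lemma Rval a : R a -> a != 0 -> 0 <= v a.
Proof. by move=> /hRV [->|//]; rewrite eqxx. Qed.

Lemma m_R a : m a -> R a.
Proof. by case: hloc => [[h _] _ _]; apply: h. Qed.

Lemma m_not1 : ~ m 1. Proof. by case: hloc. Qed.

Lemma mD a b : m a -> m b -> m (a + b).
Proof. by case: hloc => [[_ [_ h _]] _ _]; apply: h. Qed.

Lemma mM r a : R r -> m a -> m (r * a).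
Proof. by case: hloc => [[_ [_ _ h]] _ _]; apply: h. Qed.

Lemma pos_m b : R b -> b != 0 -> 0 < v b -> m b.
Proof.
move=> hb b0 hp. case: hloc => _ _ h.
apply: Classical_Prop.NNPP => hn. have [d [hd e1]] := h b hb hn.
have d0 : d != 0 by apply/negP => /eqP d0; move: e1; rewrite d0 mulr0 => /eqP; rewrite eq_sym oner_eq0.
have := Rval hd d0. have := vM hv b0 d0. rewrite e1 v1 // => ->. lia.
Qed.

Lemma m_pos b : m b -> b != 0 -> 0 < v b.
Proof.
move=> hb b0. have hbR := m_R hb.
have := Rval hbR b0. rewrite le_eqVlt => /orP [/eqP h0|//].
exfalso.
have hi : b^-1 != 0 by rewrite invr_eq0.
have : valring v b^-1 by right; rewrite vV // -h0.
case/hres => l [hl hm].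
set w : K := 1 - l * b.
have ew : w = b * (b^-1 - l) by rewrite /w mulrBr mulfV // mulrC.
have hwR : R w by apply: RB; [exact: R1|exact: RM].
have e1 : 1 = l * b + w by rewrite /w addrC subrK.
have hlb : m (l * b) := mM hl hb.
have [w0|w0] := eqVneq w 0.
  apply: m_not1; rewrite e1 w0 addr0 //.
have hwm : m w.
  apply: pos_m => //. rewrite ew. case: hm => [h|h].
    by move: w0; rewrite ew h mulr0 eqxx.
  have hd : b^-1 - l != 0 by apply/negP => /eqP h'; move: w0; rewrite ew h' mulr0 eqxx.
  rewrite vM // -h0. by rewrite add0r.
apply: m_not1; rewrite e1; exact: mD.
Qed.

Lemma approx z s : z != 0 -> s != 0 -> v z = v s ->
  exists l, R l /\ (z - l * s = 0 \/ v z < v (z - l * s)).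
Proof.
move=> z0 s0 e.
have hs : s^-1 != 0 by rewrite invr_eq0.
have a0 : z / s != 0 by rewrite mulf_neq0.
have : valring v (z / s) by right; rewrite vM // vV // e; lia.
case/hres => l [hl hm]. exists l; split => //.
have ew : z - l * s = (z / s - l) * s by rewrite mulrBl divfK.
have [h|hd] := eqVneq (z / s - l) 0; first by left; rewrite ew h mul0r.
case: hm => [h|h]; first by move: hd; rewrite h eqxx.
have h2 : 0 < v (z / s - l) := h. right; rewrite ew vM // -e. lia.
Qed.

Lemma desc (M N : K -> Prop) (th : int) :
 (forall z, M z -> z != 0 -> th <= v z -> N z) ->
 (forall z, M z -> z != 0 -> v z < th -> exists s, [/\ N s, s != 0 & v s = v z]) ->
 (forall l s z, R l -> N s -> M z -> z != 0 -> s != 0 -> v s = v z -> M (z - l * s)) ->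
 (forall l s z, R l -> N s -> N (z - l * s) -> N z) ->
 N 0 ->
 forall z, M z -> N z.
Proof.
move=> htop hmatch hcl hcl2 hN0.
suff H : forall n : nat, forall z, M z -> z != 0 -> th - v z <= n%:Z -> N z.
  move=> z hz. have [->|z0] := eqVneq z 0; first by [].
  apply: (H `|th - v z|%N) => //. lia.
elim=> [|n IH] z hz z0 hb.
  apply: htop => //. lia.
have [hle|hlt] := lerP th (v z); first exact: htop.
have [s [hs s0 es]] := hmatch z hz z0 hlt.
have [l [hl hd]] := approx z0 s0 (esym es).
apply: (hcl2 l s) => //.
have hz' := hcl l s z hl hs hz z0 s0 es.
have [->|z'0] := eqVneq (z - l * s) 0; first by [].
case: hd => [h|hd]; first by move: z'0; rewrite h eqxx.
apply: IH => //. lia.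
Qed.


Lemma common_den (sq : seq K) : is_frac_field R ->
  exists d, [/\ R d, d != 0 & forall i, (i < size sq)%N -> R (d * sq`_i)].
Proof.
move=> hf; elim: sq => [|a sq [d [hd d0 hs]]].
  exists 1; split => //; [exact: R1|exact: oner_neq0].
have [b [d1 [hb hd1 d10 ea]]] := hf a.
exists (d1 * d); split; [exact: RM|by rewrite mulf_neq0|].
case=> [|i] /= hi.
  have -> : d1 * d * a = d * b by rewrite ea; field.
  exact: RM.
rewrite -mulrA; apply: RM => //; exact: hs.
Qed.

Lemma thresh : is_frac_field R -> (exists sq : seq K, kseteq (valring v) (Rspan R sq)) ->
  exists N : int, forall z, z != 0 -> N <= v z -> R z.
Proof.
move=> hf [sq hs]. have [d [hd d0 hds]] := common_den sq hf.
exists (v d) => z z0 hz.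
have hq : valring v (z / d).
  right. rewrite vM ?invr_eq0 // vV //. lia.
have -> : z = d * (z / d) by rewrite mulrC divfK.
have [rs' [_ hrs' ->]] := (hs _).1 hq.
rewrite mulr_sumr. apply: (big_ind R); [exact: R0|exact: RD|].
move=> i _. rewrite mulrCA. apply: RM; [exact: hrs'|exact: hds].
Qed.

End Ring.

Lemma vset_sub (K : fieldType) (v : K -> int) (A B : K -> Prop) d :
  ksubset A B -> vset v A d -> vset v B d.
Proof. by move=> h [a [ha a0 e]]; exists a; split => //; apply: h. Qed.

Section Len.
Variable K : fieldType.
Variable v : K -> int.
Variables R m : K -> Prop.
Implicit Types a b z s l : K.
Hypothesis hv : is_valuation v.
Hypothesis hR : subring R.
Hypothesis hRV : forall a, R a -> ge v 0 a.
Hypothesis hloc : local_with R m.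
Hypothesis hres : forall a, valring v a -> exists b, R b /\ valmax v (a - b).
Variable c : int.
Hypothesis hc : forall z, z != 0 -> c <= v z -> R z.

Lemma mod0 M : Rmodule R M -> M 0. Proof. by case. Qed.
Lemma modD M a b : Rmodule R M -> M a -> M b -> M (a + b). Proof. by case=> _ h _; apply: h. Qed.
Lemma modM M l a : Rmodule R M -> R l -> M a -> M (l * a). Proof. by case=> _ _ h; apply: h. Qed.
Lemma modB M l a b : Rmodule R M -> R l -> M a -> M b -> M (a - l * b).
Proof. move=> hM hl ha hb. rewrite -mulNr. apply: modD => //. apply: modM => //. exact: RN. Qed.
Lemma modB' M l a b : Rmodule R M -> R l -> M (a - l * b) -> M b -> M a.
Proof. move=> hM hl ha hb. have -> : a = (a - l * b) + l * b by rewrite subrK.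
apply: modD => //; exact: modM. Qed.

Lemma chain_le (M : K -> Prop) (Dl : seq int) n :
  (forall d, d \in Dl <-> (vset v M d /\ ~ vset v R d)) ->
  Rchain R R M n -> (n <= size Dl)%N.
Proof.
move=> hD [f [h0 hn hmod hstr]].
have incl : forall i j, (i <= j <= n)%N -> ksubset (f i) (f j).
  move=> i j; elim: j => [|j IH].
    rewrite leqn0 => /andP [/eqP -> _] a //.
  move=> /andP [hij hjn].
  rewrite leq_eqVlt in hij. case/orP: hij => [/eqP -> a //|hij].
  move=> a ha. apply: (proj1 (hstr j hjn)). apply: IH => //. by rewrite -ltnS hij ltnW.
have step : forall i, (i < n)%N -> exists d, vset v (f i.+1) d /\ ~ vset v (f i) d.
  move=> i hi. apply: NNPP => hne. apply: (proj2 (hstr i hi)).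
  have hMi := hmod i (ltnW hi). have hMi1 := hmod i.+1 hi.
  have hsub : ksubset (f i) (f i.+1) := proj1 (hstr i hi).
  apply: (@desc _ _ R hv hres (f i.+1) (f i) c).
  - move=> z _ z0 hz. apply: (incl 0%N i) => //; first by rewrite leq0n ltnW.
    apply/h0. exact: hc.
  - move=> z hz z0 _. have : vset v (f i) (v z).
      apply: NNPP => hnv; apply: hne; exists (v z); split => //; by exists z.
    case=> s [hs s0 es]; by exists s.
  - move=> l s z hl hs hz _ _ _. apply: modB => //; exact: hsub.
  - move=> l s z hl hs hz. exact: (modB' hMi hl hz hs).
  - exact: mod0.
have H : forall k, (k <= n)%N -> exists L : seq int,
    [/\ size L = k, uniq L & forall d, d \in L -> d \in Dl /\ vset v (f k) d].
  elim=> [|k IH] hk; first by exists [::].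
  have [L [hs hu hL]] := IH (ltnW hk).
  have [d [hd1 hd2]] := step k hk.
  exists (d :: L); split => /=; first by rewrite hs.
    rewrite hu andbT. apply/negP => /hL [_ hdk]. exact: hd2.
  move=> d'. rewrite in_cons => /orP [/eqP ->|hd'].
    split => //. apply/hD; split.
      apply: vset_sub hd1. move=> a ha. apply: (proj1 (hn a)). have hk1 : (k.+1 <= n <= n)%N by rewrite leqnn hk. exact: (incl k.+1 n hk1 a ha).
    move=> hR'; apply: hd2. apply: vset_sub hR'. move=> a ha.
    apply: (incl 0%N k); [by rewrite leq0n ltnW|by apply/h0].
  have [h1 h2] := hL d' hd'. split => //. apply: vset_sub h2. exact: proj1 (hstr k hk).
have [L [hs hu hL]] := H n (leqnn n).
rewrite -hs. apply: uniq_leq_size => // d /hL [] //.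
Qed.


Lemma chain_ge (M : K -> Prop) (Dl : seq int) :
  Rmodule R M -> ksubset R M -> sorted <%R Dl ->
  (forall d, d \in Dl <-> (vset v M d /\ ~ vset v R d)) ->
  Rchain R R M (size Dl).
Proof.
move=> hM hRM hsort hD.
set n := size Dl.
have hDc : forall d, d \in Dl -> d < c.
  move=> d /hD [[a [ha a0 ea]] hn]. rewrite ltNge. apply/negP => hcd.
  apply: hn. exists a; split => //. apply: hc => //. by rewrite ea.
have ltr_tr : transitive (<%R : rel int) by move=> x y z; exact: lt_trans.
have hnth : forall i j, (i < j < n)%N -> nth 0 Dl i < nth 0 Dl j.
  move=> i j /andP [hij hjn]. apply: (sorted_ltn_nth ltr_tr 0 hsort) => //.
    rewrite inE. exact: ltn_trans hjn.
pose th i := if i == 0%N then c else nth 0 Dl (n - i).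
have thD : forall i, (i < n)%N -> th i.+1 \in Dl.
  move=> i hi. rewrite /th /=. apply: mem_nth. rewrite /n in hi *. rewrite ltn_subrL. apply/andP; split => //. exact: leq_ltn_trans (leq0n i) hi.
have thlt : forall i, (i < n)%N -> th i.+1 < th i.
  move=> i hi. case: i hi => [|i] hi.
    rewrite /th /=. exact: hDc (thD 0%N hi).
  rewrite /th /=. apply: hnth. apply/andP; split; rewrite /n in hi *; lia.
have thmin : forall d, d \in Dl -> th n <= d.
  move=> d hd. have hn0 : (0 < n)%N by rewrite /n; case: (Dl) hd.
  rewrite /th. have -> : (n == 0%N) = false by apply/negP => /eqP h; rewrite h in hn0.
  rewrite subnn. rewrite -(nth_index 0 hd).
  have hi : (index d Dl < n)%N by rewrite index_mem.
  case: (index d Dl) hi => [|j] hj //.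
  apply/ltW. apply: hnth. by rewrite hj.
pose f i z := exists r a, [/\ R r, M a, ge v (th i) a & z = r + a].
have fmod : forall i, Rmodule R (f i).
  move=> i; split.
  - exists 0, 0; split; [exact: R0|exact: mod0|by left|by rewrite addr0].
  - move=> a b [r1 [a1 [hr1 ha1 hg1 ->]]] [r2 [a2 [hr2 ha2 hg2 ->]]].
    exists (r1 + r2), (a1 + a2); split; [exact: RD|exact: modD|exact: geD|].
    by rewrite addrACA.
  - move=> l a hl [r1 [a1 [hr1 ha1 hg1 ->]]].
    exists (l * r1), (l * a1); split; [exact: RM|exact: modM|..|by rewrite mulrDr].
    have := geM hv (hRV hl) hg1. by rewrite add0r.
have fM : forall i z, f i z -> M z.
  move=> i z [r [a [hr ha _ ->]]]. apply: modD => //. exact: hRM.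
have Rf : forall i z, R z -> f i z.
  move=> i z hz. exists z, 0; split => //; [exact: mod0|by left|by rewrite addr0].
exists f; split.
- move=> z; split; last exact: Rf.
  move=> [r [a [hr ha hg ->]]]. apply: RD => //.
  case: hg => [->|hg]; first exact: R0.
  have [a0|a0] := eqVneq a 0; first by rewrite a0; exact: R0.
  apply: hc => //.
- move=> z; split; first exact: fM.
  apply: (@desc _ _ R hv hres M (f n) (th n)).
  + move=> z' hz' z0 hle. exists 0, z'; split; [exact: R0|by []|by right|by rewrite add0r].
  + move=> z' hz' z0 hlt.
    have : vset v R (v z').
      apply: NNPP => hn'. have : v z' \in Dl by apply/hD; split => //; exists z'.
      move/thmin. lia.
    case=> s [hs s0 es]. exists s; split => //. exact: Rf.
  + move=> l s z' hl hs hz' _ _ _. apply: modB => //. exact: fM hs.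
  + move=> l s z' hl hs hz'. exact: (modB' (fmod n) hl hz' hs).
  + exact: mod0.
- move=> i _; exact: fmod.
- move=> i hi; split.
    move=> z [r [a [hr ha hg ->]]]. exists r, a; split => //.
    apply: ge_le hg. apply/ltW. exact: thlt.
  move=> hsub.
  have [[a [ha a0 ea]] hnR] := (hD _).1 (thD i hi).
  have fa : f i.+1 a.
    exists 0, a; split; [exact: R0|by []|right; rewrite ea //|by rewrite add0r].
  have [r [a' [hr ha' hg ea']]] := hsub a fa.
  apply: hnR.
  have er : r = a - a' by rewrite ea' addrK.
  have [a'0|a'0] := eqVneq a' 0.
    exists a; split => //. by rewrite ea' a'0 addr0.
  case: hg => [h|hg]; first by move: a'0; rewrite h eqxx.
  have hlt : v a < v (- a') by rewrite vN // ea; move: (thlt i hi); lia.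
  have na0 : - a' != 0 by rewrite oppr_eq0.
  have [hs hv'] := vDlt hv a0 na0 hlt.
  exists r; split => //; rewrite er //. by rewrite hv'.
Qed.

End Len.


Lemma len_eq (K : fieldType) (v : K -> int) (R M : K -> Prop) (c : int) (Dl : seq int) r :
  is_valuation v -> subring R -> (forall a, R a -> ge v 0 a) ->
  (forall a, valring v a -> exists b, R b /\ valmax v (a - b)) ->
  (forall z, z != 0 -> c <= v z -> R z) ->
  Rmodule R M -> ksubset R M -> sorted <%R Dl ->
  (forall d, d \in Dl <-> (vset v M d /\ ~ vset v R d)) ->
  Rlength R R M r -> r = size Dl.
Proof.
move=> hv hR hRV hres hc hM hRM hs hD [hch hmax].
apply/eqP; rewrite eqn_leq; apply/andP; split.
  exact: (chain_le hv hR hres hc hD hch).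
apply: hmax. exact: (chain_ge hv hR hRV hres hc hM hRM hs hD).
Qed.

Section Main.
Variable K : fieldType.
Variable v : K -> int.
Variables R m : K -> Prop.
Implicit Types a b z l : K.
Hypothesis hv : is_valuation v.
Hypothesis hR : subring R.
Hypothesis hRV : forall a, R a -> ge v 0 a.
Hypothesis hloc : local_with R m.
Hypothesis hres : forall a, valring v a -> exists b, R b /\ valmax v (a - b).
Variables c e y p : int.
Variable x : K.
Hypothesis hc : forall z, z != 0 -> c <= v z -> R z.
Hypothesis hcS : forall n, c <= n -> vset v R n.
Hypothesis he : vset v R e.
Hypothesis he0 : 0 < e.
Hypothesis hemin : forall n, vset v R n -> 0 < n -> e <= n.
Hypothesis hxm : m x.
Hypothesis hx0 : x != 0.
Hypothesis hxe : v x = e.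
Hypothesis hy : vset v R y.
Hypothesis hy0 : 0 < y.
Hypothesis hyc : y < c.
Hypothesis hye : ~ vset v R (y - e).
Hypothesis hyu : forall y', vset v R y' -> 0 < y' -> y' < c -> ~ vset v R (y' - e) -> y' = y.
Hypothesis hp1 : c - e <= p * e.
Hypothesis hp2 : p * e < c.

Local Notation S := (vset v R).
Local Notation T := (vset v (colon R m)).

Lemma S0 : S 0.
Proof. exists 1; split; [exact: R1|exact: oner_neq0|exact: v1]. Qed.

Lemma Snn n : S n -> 0 <= n.
Proof. case=> a [ha a0 <-]. exact: (Rval hRV ha a0). Qed.

Lemma Sadd n1 n2 : S n1 -> S n2 -> S (n1 + n2).
Proof.
case=> a [ha a0 <-] [b [hb b0 <-]]. exists (a * b); split; [exact: RM|exact: mulf_neq0|exact: vM].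
Qed.

Lemma xR : R x. Proof. exact: m_R hxm. Qed.

Lemma Se (i : nat) : S (i%:Z * e).
Proof. exists (x ^+ i); split; [exact: RX xR|exact: expf_neq0|by rewrite vX // hxe]. Qed.

Lemma Sye (j : nat) : S (y + j%:Z * e).
Proof. exact: Sadd hy (Se j). Qed.

Lemma struct s : S s -> s < c -> (exists i : nat, s = i%:Z * e) \/ (exists j : nat, s = y + j%:Z * e).
Proof.
move=> hs hsc.
suff H : forall n : nat, forall s, S s -> s < c -> s <= n%:Z ->
  (exists i : nat, s = i%:Z * e) \/ (exists j : nat, s = y + j%:Z * e).
  apply: (H `|s|%N) => //. have := Snn hs. lia.
elim=> [|n IH] s' hs' hsc' hle.
  left; exists 0%N. have := Snn hs'. lia.
have [->|s0] := eqVneq s' 0; first by left; exists 0%N; rewrite mul0r.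
have hpos : 0 < s' by have := Snn hs'; lia.
case: (classic (S (s' - e))) => hse.
  have := Snn hse => hge.
  have [[i hi]|[j hj]] := IH (s' - e) hse ltac:(lia) ltac:(lia).
    left; exists i.+1. rewrite intS. lia.
  right; exists j.+1. rewrite intS. lia.
right; exists 0%N. rewrite mul0r addr0. exact: hyu.
Qed.

Lemma y_ge_e : e <= y. Proof. exact: hemin. Qed.

Lemma y_notmul (i : nat) : y <> i%:Z * e.
Proof.
move=> hyi. apply: hye.
have hi : (1 <= i)%N by case: i hyi => [|i] hyi //; move: hy0; rewrite hyi mul0r.
have -> : y - e = (i.-1)%:Z * e by rewrite hyi; case: i hi {hyi} => // i _; rewrite intS /=; lia.
exact: Se.
Qed.

Lemma e2 : 2 <= e.
Proof.
have h := @y_notmul `|y|%N. have : e != 1.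
  apply/negP => /eqP e1; apply: h. rewrite e1 mulr1. lia.
move: he0. lia.
Qed.


Lemma p0 : 0 <= p.
Proof. have := y_ge_e. nia. Qed.

Lemma Spe : S (p * e).
Proof. have -> : p = `|p|%N%:Z by have := p0; lia. exact: Se. Qed.

Lemma floor_ex (a : int) : 0 <= a -> exists j : nat, j%:Z * e <= a /\ a < j%:Z * e + e.
Proof.
move=> ha.
suff H : forall n : nat, forall w : int, 0 <= w -> w <= n%:Z -> exists j : nat, j%:Z * e <= w /\ w < j%:Z * e + e.
  apply: (H `|a|%N) => //. lia.
elim=> [|n IH] a' h1 h2.
  exists 0%N. rewrite mul0r add0r. lia.
have [hlt|hge] := ltP a' e.
  exists 0%N. rewrite mul0r add0r. lia.
have [j [hj1 hj2]] := IH (a' - e) ltac:(lia) ltac:(lia).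
exists j.+1. rewrite intS. lia.
Qed.

Lemma yy_ex : exists j : nat, c - e <= y + j%:Z * e /\ y + j%:Z * e < c.
Proof.
have [j [h1 h2]] := floor_ex (a := c - 1 - y) ltac:(lia).
exists j. lia.
Qed.

Lemma window_mul (i1 i2 : int) : c - e <= i1 * e -> i1 * e < c -> c - e <= i2 * e -> i2 * e < c -> i1 = i2.
Proof. move=> *. nia. Qed.

Lemma win (a i1 i2 : int) : a <= i1 * e -> i1 * e < a + e -> a <= i2 * e -> i2 * e < a + e -> i1 = i2.
Proof. move=> *. have := he0. nia. Qed.

Lemma mval b : m b -> b != 0 -> e <= v b.
Proof.
move=> hb b0. apply: hemin; last exact: (m_pos hv hR hRV hloc hres hb b0).
exists b; split => //. exact: m_R hb.
Qed.

Lemma unif : exists t, t != 0 /\ v t = 1.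
Proof. by case: hv. Qed.

Lemma elem (n : int) : 0 <= n -> exists a, a != 0 /\ v a = n.
Proof.
move=> hn. have [t [t0 vt]] := unif. exists (t ^+ `|n|%N); split; first exact: expf_neq0.
rewrite vX // vt mulr1. lia.
Qed.

Lemma T_big n : c - e <= n -> T n.
Proof.
move=> hn. have [a [a0 va]] := elem (n := n) ltac:(have := y_ge_e; lia).
exists a; split => //. move=> b hb.
have [->|b0] := eqVneq b 0; first by rewrite mulr0; exact: R0.
apply: hc; first exact: mulf_neq0.
rewrite vM // va. have := mval hb b0. lia.
Qed.

Lemma u_ex : exists u, [/\ R u, m u, u != 0 & v u = y].
Proof.
case: hy => u [hu u0 vu]. exists u; split => //.
apply: (pos_m hv hRV hloc) => //. by rewrite vu.
Qed.

Lemma Tval a : colon R m a -> a != 0 -> S (v a + e) /\ S (v a + y).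
Proof.
move=> ha a0. have [u [hu hum u0 vu]] := u_ex.
split.
  exists (a * x); split; [exact: ha|exact: mulf_neq0|by rewrite vM // hxe].
exists (a * u); split; [exact: ha|exact: mulf_neq0|by rewrite vM // vu].
Qed.


Definition rng := [seq c - e + i%:Z | i <- iota 0 `|e|].

Lemma mem_rng n : (n \in rng) = (c - e <= n < c).
Proof.
apply/idP/idP.
  case/mapP => i; rewrite mem_iota => hi ->. have := he0. lia.
move/andP => [h1 h2]; apply/mapP; exists (absz (n - (c - e))%R); first by rewrite mem_iota; lia.
lia.
Qed.

Lemma uniq_rng : uniq rng.
Proof.
rewrite map_inj_uniq ?iota_uniq // => i j /addrI /eqP; rewrite eqz_nat => /eqP //.
Qed.

Lemma sorted_rng : sorted <%R rng.
Proof.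
rewrite sorted_map; apply: sub_sorted (iota_ltn_sorted 0 _) => i j /=.
by rewrite ltrD2l ltz_nat.
Qed.

Definition Dl0 (yy : int) := rem yy (rem (p * e) rng).

Section YY.
Variable j : nat.
Hypothesis hj1 : c - e <= y + j%:Z * e.
Hypothesis hj2 : y + j%:Z * e < c.
Local Notation yy := (y + j%:Z * e).

Lemma pe_ne_yy : p * e <> yy.
Proof.
move=> h. apply: (@y_notmul `|p - j%:Z|%N). have := he0. have := y_ge_e. nia.
Qed.

Lemma mem_Dl0 d : d \in Dl0 yy <-> [/\ c - e <= d < c, d <> p * e & d <> yy].
Proof.
rewrite /Dl0 (mem_rem_uniq _ (rem_uniq _ uniq_rng)) inE (mem_rem_uniq _ uniq_rng) inE mem_rng.
split.
  case/andP => /eqP h1 /andP [/eqP h2 h3]. by split.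
case=> h1 h2 h3. apply/andP; split; first by apply/eqP.
apply/andP; split => //; by apply/eqP.
Qed.

Lemma size_Dl0 : size (Dl0 yy) = (`|e|.-1).-1%N.
Proof.
have hpe : p * e \in rng by rewrite mem_rng; apply/andP.
have hyy : yy \in rem (p * e) rng.
  rewrite (mem_rem_uniq _ uniq_rng) inE mem_rng. apply/andP; split.
    apply/eqP => h; exact: pe_ne_yy (esym h).
  by apply/andP.
rewrite /Dl0 size_rem // size_rem // size_map size_iota //.
Qed.

Lemma sorted_Dl0 : sorted <%R (Dl0 yy).
Proof.
apply: (subseq_sorted (@lt_trans _ _) _ sorted_rng).
apply: subseq_trans (rem_subseq _ _) (rem_subseq _ _).
Qed.

Lemma sorted_Dl0B : sorted <%R ((y - e) :: Dl0 yy).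
Proof.
rewrite /= path_sortedE; last exact: (@lt_trans _ _).
rewrite sorted_Dl0 andbT. apply/allP => d /mem_Dl0 [/andP [h1 h2] _ _].
have := y_ge_e. lia.
Qed.

Lemma notS_window d : c - e <= d -> d < c -> d <> p * e -> d <> yy -> ~ S d.
Proof.
move=> h1 h2 h3 h4 hs.
have [[i hi]|[j' hj']] := struct hs h2.
  apply: h3. rewrite hi. congr (_ * _). apply: window_mul; lia.
apply: h4. rewrite hj'. congr (_ + _). congr (_ * _).
apply: (@win (c - e - y)); lia.
Qed.

Lemma TnotS d : T d -> ~ S d -> (c - e <= d < c) \/ d = y - e.
Proof.
case=> a [ha a0 ea] hnS.
have [h1 h2] := Tval ha a0. rewrite ea in h1 h2.
have hdc : d < c by rewrite ltNge; apply/negP => h; exact: hnS (hcS h).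
have [hce|hce] := lerP c (d + e).
  left. apply/andP; split => //. lia.
have [[i hi]|[j' hj']] := struct h1 hce.
  case: i hi => [|i] hi.
    exfalso; apply: hye. have -> : y - e = d + y by move: hi; rewrite mul0r => hi; lia.
    exact: h2.
  exfalso; apply: hnS. have -> : d = i%:Z * e by move: hi; rewrite intS; lia.
  exact: Se.
case: j' hj' => [|j'] hj'.
  right. move: hj'. rewrite mul0r addr0. lia.
exfalso; apply: hnS. have -> : d = y + j'%:Z * e by move: hj'; rewrite intS; lia.
exact: Sye.
Qed.

Lemma charNB : ~ T (y - e) -> forall d, d \in Dl0 yy <-> (T d /\ ~ S d).
Proof.
move=> hB d; split.
  case/mem_Dl0 => /andP [h1 h2] h3 h4. split; first exact: T_big.
  exact: notS_window.
case=> hT hS. case: (TnotS hT hS) => [hw|hd]; last by move: hT; rewrite hd.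
apply/mem_Dl0; split => // h.
  apply: hS. rewrite h. exact: Spe.
apply: hS. rewrite h. exact: Sye.
Qed.

Lemma charB : T (y - e) -> forall d, d \in (y - e) :: Dl0 yy <-> (T d /\ ~ S d).
Proof.
move=> hB d; rewrite in_cons; split.
  case/orP => [/eqP ->|]; first by split.
  case/mem_Dl0 => /andP [h1 h2] h3 h4. split; first exact: T_big.
  exact: notS_window.
case=> hT hS. case: (TnotS hT hS) => [hw|hd]; last by rewrite hd eqxx.
apply/orP; right.
apply/mem_Dl0; split => // h.
  apply: hS. rewrite h. exact: Spe.
apply: hS. rewrite h. exact: Sye.
Qed.

End YY.


Lemma m0 : m 0.
Proof. by case: hloc => [[_ [h _ _]] _ _]. Qed.

Lemma K1 : c + e <= 2 * y -> T (y - e).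
Proof.
move=> h2y. have [u [hu hum u0 vu]] := u_ex.
have hxi : x^-1 != 0 by rewrite invr_eq0.
have a0 : u / x != 0 by rewrite mulf_neq0.
have va : v (u / x) = y - e by rewrite vM // vV // vu hxe.
pose N b := m b /\ R (u / x * b).
have key : forall b, m b -> N b.
  apply: (@desc _ _ R hv hres m N c).
  - move=> b hb b0 hcb. split => //. apply: hc; first exact: mulf_neq0.
    rewrite vM // va. have := y_ge_e. lia.
  - move=> b hb b0 hbc.
    have hSb : S (v b) by exists b; split => //; exact: m_R hb.
    have hpos := m_pos hv hR hRV hloc hres hb b0.
    have [[i hi]|[j hj]] := struct hSb hbc.
      case: i hi => [|i] hi; first by move: hpos; rewrite hi mul0r ltxx.
      exists (x ^+ i.+1); split.
      + split.
          rewrite exprSr. apply: (mM hloc) => //. exact: RX xR.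
        have -> : u / x * x ^+ i.+1 = u * x ^+ i by rewrite exprSr; field.
        apply: RM => //; exact: RX xR.
      + exact: expf_neq0.
      + by rewrite vX // hxe hi.
    exists b; split => //. split => //. apply: hc; first exact: mulf_neq0.
    rewrite vM // va hj. have := y_ge_e. nia.
  - move=> l s z hl [hs _] hz _ _ _. rewrite -mulNr. apply: (mD hloc) => //.
    apply: (mM hloc) => //. exact: RN.
  - move=> l s z hl [hs1 hs2] [hz1 hz2]. split.
      have -> : z = (z - l * s) + l * s by rewrite subrK.
      apply: (mD hloc) => //. exact: (mM hloc).
    have -> : u / x * z = u / x * (z - l * s) + l * (u / x * s) by ring.
    apply: RD => //. exact: RM.
  - split; first exact: m0. rewrite mulr0. exact: R0.
exists (u / x); split => //. move=> b hb. exact: (key b hb).2.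
Qed.

Lemma K2 : T (y - e) -> S (2 * y - e).
Proof.
case=> a [ha a0 ea]. have [_ h] := Tval ha a0.
have -> : 2 * y - e = v a + y by rewrite ea; lia. exact: h.
Qed.

Lemma K3 : T (y - e) <-> vset v (colon (principal R x) m) y.
Proof.
split.
  case=> a [ha a0 ea]. exists (x * a); split.
  - move=> b hb. exists (a * b); split; first exact: ha. by rewrite mulrA.
  - exact: mulf_neq0.
  - rewrite vM // hxe ea. lia.
case=> a [ha a0 ea]. exists (a / x); split.
- move=> b hb. have [r [hr er]] := ha b hb.
  have -> : a / x * b = r by rewrite mulrAC er; field.
  exact: hr.
- by rewrite mulf_neq0 // invr_eq0.
- rewrite vM ?invr_eq0 // vV // ea hxe. lia.
Qed.

Lemma K4 : S (2 * y - e) -> 2 * y - e < c -> exists q : int, 1 <= q /\ 2 * y = (2 * q + 1) * e.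
Proof.
move=> hs hsc.
have [[i hi]|[j hj]] := struct hs hsc.
  have hi2 : (i = 2 * i./2 + odd i)%N by lia.
  case ho: (odd i) hi2 => hi2.
    exfalso; apply: (@y_notmul (i./2).+1). rewrite hi2 in hi. move: hi. rewrite intS. lia.
  exists (i./2)%:Z. rewrite hi2 in hi. have := y_ge_e. have := he0. split; nia.
exfalso; apply: (@y_notmul j.+1). rewrite intS. lia.
Qed.

Lemma colon_mod : Rmodule R (colon R m).
Proof.
split.
- move=> b hb. rewrite mul0r. exact: R0.
- move=> a b ha hb d hd. rewrite mulrDl. apply: (RD hR); [exact: (ha d hd)|exact: (hb d hd)].
- move=> l a hl ha d hd. rewrite -mulrA. apply: RM => //. exact: (ha d hd).
Qed.

Lemma R_colon : ksubset R (colon R m).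
Proof. move=> a ha b hb. apply: RM => //. exact: m_R hb. Qed.

Lemma final (r : nat) : Rlength R R (colon R m) r ->
  ((r%:Z = e - 1) <->
     (c + e <= 2 * y \/
      exists q : int, [/\ 1 <= q, 2 * y = (2 * q + 1) * e, 2 * y < c + e, 2 <= p
                       & vset v (colon (principal R x) m) y])) /\
  ((r%:Z = e - 2) <->
     (2 * y < c + e /\
      forall q : int, 2 * y = (2 * q + 1) * e -> ~ vset v (colon (principal R x) m) y)).
Proof.
move=> hlen.
have [j [hj1 hj2]] := yy_ex.
have he2 := e2.
have hB : T (y - e) <-> (c + e <= 2 * y \/
      exists q : int, [/\ 1 <= q, 2 * y = (2 * q + 1) * e, 2 * y < c + e, 2 <= p
                       & vset v (colon (principal R x) m) y]).
  split.
    move=> hT. have [hle|hlt] := lerP (c + e) (2 * y); first by left.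
    right. have [q [hq1 hq2]] := K4 (K2 hT) ltac:(lia).
    exists q; split => //; first by have := he0; nia.
    exact: K3.1 hT.
  case=> [h|[q [_ _ _ _ hY]]]; [exact: K1|exact: K3.2 hY].
case: (classic (T (y - e))) => hT.
  have hr : r = size ((y - e) :: Dl0 (y + j%:Z * e)).
    apply: (len_eq hv hR hRV hres hc colon_mod R_colon _ _ hlen).
      first [exact: sorted_Dl0B | exact: (sorted_Dl0B hj1 hj2)].
    first [exact: (charB hj1 hj2 hT) | exact: (charB hT)].
  rewrite /= size_Dl0 // in hr.
  have hrz : r%:Z = e - 1 by rewrite hr; lia.
  split.
    split => // _. exact: hB.1 hT.
  split; first by rewrite hrz; lia.
  case=> hlt hq. exfalso.
  have [q [hq1 hq2]] := K4 (K2 hT) ltac:(lia).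
  exact: hq q hq2 (K3.1 hT).
have hr : r = size (Dl0 (y + j%:Z * e)).
  apply: (len_eq hv hR hRV hres hc colon_mod R_colon _ _ hlen).
    first [exact: sorted_Dl0 | exact: (sorted_Dl0 hj1 hj2)].
  first [exact: (charNB hj1 hj2 hT) | exact: (charNB hT)].
rewrite size_Dl0 // in hr.
have hrz : r%:Z = e - 2 by rewrite hr; lia.
split.
  split; first by rewrite hrz; lia.
  move/hB.2. done.
split => // _. split.
  rewrite ltNge; apply/negP => h. exact: hT (K1 h).
move=> q _ hY. exact: hT (K3.2 hY).
Qed.

End Main.

Theorem proposition1p12 (K : fieldType) (v : K -> int) (R m : K -> Prop)
  (c e : int) (x : K) (y p : int) (r : nat) :
  setting v R m ->
  (* c: least element of v(R) with c + N contained in v(R) *)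
  (vset v R c /\ (forall n, c <= n -> vset v R n) /\
     forall c', vset v R c' -> (forall n, c' <= n -> vset v R n) -> c <= c') ->
  (* e: least positive element of v(R) *)
  (vset v R e /\ 0 < e /\ forall n, vset v R n -> 0 < n -> e <= n) ->
  (* x in m with v(x) = e *)
  m x -> x != 0 -> v x = e ->
  (* k = l_R(R/(C + xR)) = 2 *)
  Rlength R (cond_plus_x v R x) R 2 ->
  (* y = y_1: the unique y in v(R) with 0 < y < c and y - e not in v(R) *)
  (vset v R y /\ 0 < y < c /\ ~ vset v R (y - e)) ->
  (forall y', vset v R y' -> 0 < y' < c -> ~ vset v R (y' - e) -> y' = y) ->
  (* p: c - e <= p e < c *)
  c - e <= p * e < c ->
  (* r = l_R((R :_K m)/R) *)
  Rlength R R (colon R m) r ->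
  ((r%:Z = e - 1) <->
     (c + e <= 2 * y \/
      exists q : int, [/\ 1 <= q, 2 * y = (2 * q + 1) * e, 2 * y < c + e, 2 <= p
                       & vset v (colon (principal R x) m) y])) /\
  ((r%:Z = e - 2) <->
     (2 * y < c + e /\
      forall q : int, 2 * y = (2 * q + 1) * e -> ~ vset v (colon (principal R x) m) y)).
Proof.
move=> [[hv hR hfrac hloc hnoeth] [hdim hint hfin hnreg hres]] [hcv [hcS hcmin]]
  [he [he0 hemin]] hxm hx0 hxe _ [hy [/andP [hy0 hyc] hye]] hyu /andP [hp1 hp2] hlen.
have hRV : forall a, R a -> ge v 0 a.
  move=> a ha. apply: (proj1 (hint a)). exists 1%N, [:: - a]; split => //.
    case=> //= _. exact: RN.
  by rewrite big_ord1 /= expr1 expr0 mulr1 addrN.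
have [N0 hN0] := thresh hv hR hfrac hfin.
have hc : forall z, z != 0 -> c <= v z -> R z.
  have key : forall z, ge v c z -> R z.
    apply: (@desc _ _ R hv hres (ge v c) R N0).
    - move=> z _ z0 hz. exact: hN0.
    - move=> z [->|hz] z0 _; first by move: z0; rewrite eqxx.
      have [s [hs s0 es]] := hcS (v z) hz. by exists s.
    - move=> l s z hl hs hz z0 s0 es. apply: geB => //. rewrite -[c]add0r.
      apply: geM => //; first exact: hRV. right. rewrite es. case: hz => [hz0|//].
      by move: z0; rewrite hz0 eqxx.
    - move=> l s z hl hs hz. have -> : z = (z - l * s) + l * s by rewrite subrK.
      apply: (RD hR) => //. exact: (RM hR).
    - exact: (R0 hR).
  move=> z z0 hz. apply: key. by right.
apply: (final hv hR hRV hloc hres hc hcS he0 hemin hxm hx0 hxe hy hy0 hyc hye _ hp1 hp2 hlen).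
move=> y' h1 h2 h3 h4. apply: hyu => //. by rewrite h2 h3.
Qed.
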